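(* Let $K$ be a non-archimedean local field and let $\{g_n\}$ be a sequence in $\mathrm{SL}_2(K)$ such that each cyclic group $\langle g_n\rangle$ is discrete. If $g_n$ converges to an elliptic element $g\in\mathrm{SL}_2(K)$, then the sequence $\{\mathrm{tr}(g_n)\}$ is eventually constant.
   Context: $\mathrm{SL}_2(K)$ has the subspace topology from $K^4$ and acts by isometries on its Bruhat–Tits tree $T_K$; an element is elliptic if it fixes a vertex of $T_K$. *)

(* Defs.v *)
From HB Require Import structures.
From mathcomp Require Import all_boot all_order all_algebra.
Set Implicit Arguments. Unset Strict Implicit. Unset Printing Implicit Defensive.
Import Order.TTheory GRing.Theory Num.Theory.
Local Open Scope ring_scope.

Section LocalField.
Variables (K : fieldType) (v : K -> int).

(* v is a normalized discrete valuation on K^x; its value at 0 is irrelevant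
   (0 plays the role of +oo everywhere below). *)

Definition inO (x : K) : Prop := x = 0 \/ (0 <= v x).

Definition vsmall (N : int) (x : K) : Prop := x = 0 \/ (N <= v x).

Definition vconv (x : nat -> K) (l : K) : Prop :=
  forall N : int, exists M : nat, forall n, (M <= n)%N -> vsmall N (x n - l).

Definition vcauchy (x : nat -> K) : Prop :=
  forall N : int, exists M : nat, forall m n, (M <= m)%N -> (M <= n)%N ->
    vsmall N (x m - x n).

(* K is a non-archimedean local field with normalized valuation v :
   a field complete w.r.t. a (nontrivial, normalized) discrete valuation
   with finite residue field O/m. *)
Definition nonarch_local_field : Prop :=
  [/\ (forall x y, x != 0 -> y != 0 -> v (x * y) = v x + v y),
      (forall x y, x != 0 -> y != 0 -> x + y != 0 ->
          Order.min (v x) (v y) <= v (x + y)),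
      (forall n : int, exists x, x != 0 /\ v x = n),
      (forall x : nat -> K, vcauchy x -> exists l, vconv x l) &
      (exists s : seq K, (forall y, y \in s -> inO y) /\
          forall x, inO x -> exists2 y, y \in s & vsmall 1 (x - y))].

Definition mx_conv (gs : nat -> 'M[K]_2) (g : 'M[K]_2) : Prop :=
  forall i j, vconv (fun n => gs n i j) (g i j).

Definition cyclic_sub (g : 'M[K]_2) : 'M[K]_2 -> Prop :=
  fun h => exists k : int, h = g ^ k.

(* a set H of matrices is discrete in the subspace topology from K^4 *)
Definition discrete_set (H : 'M[K]_2 -> Prop) : Prop :=
  forall h, H h -> exists N : int, forall h', H h' ->
    (forall i j, vsmall N (h' i j - h i j)) -> h' = h.

(* the O-lattice M O^2 in K^2 spanned by the columns of an invertible M *)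
Definition lattice (M : 'M[K]_2) : 'cV[K]_2 -> Prop :=
  fun x => exists y : 'cV[K]_2, (forall i, inO (y i 0)) /\ x = M *m y.

(* g fixes the vertex [M O^2] of the Bruhat-Tits tree: g L = c L for some c *)
Definition fixes_vertex (g M : 'M[K]_2) : Prop :=
  exists c : K, c != 0 /\ forall x : 'cV[K]_2,
    (exists2 y, lattice M y & x = g *m y) <-> (exists2 y, lattice M y & x = c *: y).

Definition elliptic (g : 'M[K]_2) : Prop :=
  exists M : 'M[K]_2, M \in unitmx /\ fixes_vertex g M.

End LocalField.

(* Main.v *)
Require Import Defs.
From HB Require Import structures.
From mathcomp Require Import all_boot all_order all_algebra.
From mathcomp Require Import zify ring lra.
From Stdlib Require Import Classical ClassicalEpsilon.
Import Order.TTheory GRing.Theory Num.Theory.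
Local Open Scope ring_scope.


Definition vmulP {K : fieldType} (v : K -> int) :=
  forall x y, x != 0 -> y != 0 -> v (x * y) = v x + v y.
Definition vaddP {K : fieldType} (v : K -> int) :=
  forall x y, x != 0 -> y != 0 -> x + y != 0 -> Order.min (v x) (v y) <= v (x + y).

Lemma v1 {K : fieldType} {v : K -> int} : vmulP v -> v 1 = 0.
Proof. move=> hm; have := hm 1 1 (oner_neq0 _) (oner_neq0 _); rewrite mulr1; lia. Qed.

Lemma vN1 {K : fieldType} {v : K -> int} : vmulP v -> v (-1) = 0.
Proof.
move=> hm; have h1 := v1 hm; have := hm (-1) (-1).
rewrite mulrNN mulr1 h1 oppr_eq0 oner_neq0 => /(_ isT isT); lia.
Qed.

Lemma vN {K : fieldType} {v : K -> int} : vmulP v -> forall x, v (- x) = v x.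
Proof.
move=> hm x; have [->|x0] := eqVneq x 0; first by rewrite oppr0.
by rewrite -mulN1r hm ?oppr_eq0 ?oner_neq0 // vN1 // add0r.
Qed.

Lemma vs0 {K : fieldType} {v : K -> int} N : vsmall v N 0.
Proof. by left. Qed.

Lemma vsN {K : fieldType} {v : K -> int} : vmulP v -> forall N x, vsmall v N x -> vsmall v N (- x).
Proof. move=> hm N x [->|h]; [left; exact: oppr0 | right; by rewrite vN]. Qed.

Lemma vsD {K : fieldType} {v : K -> int} : vaddP v -> forall N x y,
  vsmall v N x -> vsmall v N y -> vsmall v N (x + y).
Proof.
move=> ha N x y [->|hx]; first by rewrite add0r.
move=> [->|hy]; first by rewrite addr0; right.
have [->|x0] := eqVneq x 0; first by rewrite add0r; right.
have [->|y0] := eqVneq y 0; first by rewrite addr0; right.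
have [e|s0] := eqVneq (x + y) 0; first by left.
right; apply: le_trans (ha _ _ x0 y0 s0).
by rewrite le_min hx hy.
Qed.

Lemma vsB {K : fieldType} {v : K -> int} : vmulP v -> vaddP v -> forall N x y,
  vsmall v N x -> vsmall v N y -> vsmall v N (x - y).
Proof. by move=> hm ha N x y hx hy; apply: vsD => //; apply: vsN. Qed.

Lemma vsM {K : fieldType} {v : K -> int} : vmulP v -> forall a b x y,
  vsmall v a x -> vsmall v b y -> vsmall v (a + b) (x * y).
Proof.
move=> hm a b x y [->|hx]; first by rewrite mul0r; left.
move=> [->|hy]; first by rewrite mulr0; left.
have [->|x0] := eqVneq x 0; first by rewrite mul0r; left.
have [->|y0] := eqVneq y 0; first by rewrite mulr0; left.
by right; rewrite hm //; apply: lerD.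
Qed.

Lemma vsW {K : fieldType} {v : K -> int} a b x : vsmall v a x -> b <= a -> vsmall v b x.
Proof. by move=> [->|h] hb; [left | right; apply: le_trans h]. Qed.

Lemma vsMn {K : fieldType} {v : K -> int} : vaddP v -> forall N x n,
  vsmall v N x -> vsmall v N (x *+ n).
Proof.
move=> ha N x n hx; elim: n => [|n IH]; first by rewrite mulr0n; left.
by rewrite mulrS; apply: vsD.
Qed.

Lemma vs01 {K : fieldType} {v : K -> int} : vmulP v -> vsmall v 0 1.
Proof. by move=> hm; right; rewrite v1. Qed.

Lemma vs0n {K : fieldType} {v : K -> int} : vmulP v -> vaddP v -> forall n : nat, vsmall v 0 n%:R.
Proof. move=> hm ha n; apply: vsMn => //; exact: vs01. Qed.

Lemma vsnot {K : fieldType} {v : K -> int} x : x != 0 -> ~ vsmall v (v x + 1) x.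
Proof. move=> x0 [e|h]; first by move: x0; rewrite e eqxx. lia. Qed.

Lemma inOE {K : fieldType} {v : K -> int} x : inO v x <-> vsmall v 0 x.
Proof. by []. Qed.


Definition msmall {K : fieldType} (v : K -> int) (N : int) (A : 'M[K]_2) :=
  forall i j, vsmall v N (A i j).

Lemma sum2 (V : zmodType) (F : 'I_2 -> V) : \sum_(i < 2) F i = F 0 + F 1.
Proof.
rewrite big_ord_recr big_ord_recr big_ord0 /= GRing.add0r.
by congr (F _ + F _); apply: val_inj.
Qed.
Lemma det2 (K : comNzRingType) (A : 'M[K]_2) : \det A = A 0 0 * A 1 1 - A 0 1 * A 1 0.
Proof.
rewrite (expand_det_row _ 0) sum2 /cofactor !det_mx11 !mxE /=.
have -> : lift 0 0 = 1 :> 'I_2 by apply: val_inj.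
have -> : lift 1 0 = 0 :> 'I_2 by apply: val_inj.
by rewrite expr0 expr1 !mul1r mulN1r mulrN.
Qed.
Lemma tr2 (K : comNzRingType) (A : 'M[K]_2) : \tr A = A 0 0 + A 1 1.
Proof. by rewrite /mxtrace sum2. Qed.
Lemma mulE2 {K : fieldType} (A B : 'M[K]_2) i j :
  (A * B) i j = A i 0 * B 0 j + A i 1 * B 1 j.
Proof. by rewrite -mulmxE mxE sum2. Qed.


Lemma ms0 {K : fieldType} {v : K -> int} N : msmall v N 0.
Proof. by move=> i j; rewrite mxE; left. Qed.

Lemma msD {K : fieldType} {v : K -> int} : vaddP v -> forall N A B,
  msmall v N A -> msmall v N B -> msmall v N (A + B).
Proof. by move=> ha N A B hA hB i j; rewrite mxE; apply: vsD. Qed.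

Lemma msN {K : fieldType} {v : K -> int} : vmulP v -> forall N A,
  msmall v N A -> msmall v N (- A).
Proof. by move=> hm N A hA i j; rewrite mxE; apply: vsN. Qed.

Lemma msB {K : fieldType} {v : K -> int} : vmulP v -> vaddP v -> forall N A B,
  msmall v N A -> msmall v N B -> msmall v N (A - B).
Proof. by move=> hm ha N A B hA hB; apply: msD => //; apply: msN. Qed.

Lemma msMn {K : fieldType} {v : K -> int} : vaddP v -> forall N A n,
  msmall v N A -> msmall v N (A *+ n).
Proof. by move=> ha N A n hA i j; rewrite mulmxnE; apply: vsMn. Qed.

Lemma msW {K : fieldType} {v : K -> int} a b A : msmall v a A -> b <= a -> msmall v b A.
Proof. by move=> hA hb i j; apply: vsW (hA i j) hb. Qed.

Lemma msM {K : fieldType} {v : K -> int} : vmulP v -> vaddP v -> forall a b A B,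
  msmall v a A -> msmall v b B -> msmall v (a + b) (A * B).
Proof. by move=> hm ha a b A B hA hB i j; rewrite mulE2; apply: (vsD ha); apply: (vsM hm). Qed.

Lemma msZ {K : fieldType} {v : K -> int} : vmulP v -> forall a b x A,
  vsmall v a x -> msmall v b A -> msmall v (a + b) (x *: A).
Proof. by move=> hm a b x A hx hA i j; rewrite mxE; apply: vsM. Qed.

Lemma ms1 {K : fieldType} {v : K -> int} : vmulP v -> msmall v 0 1.
Proof.
move=> hm i j; rewrite mxE; case: (i == j); rewrite /= ?mulr1n ?mulr0n.
  exact: vs01. by left.
Qed.

Lemma msX {K : fieldType} {v : K -> int} : vmulP v -> vaddP v -> forall A k,
  msmall v 0 A -> msmall v 0 (A ^+ k).
Proof.
move=> hm ha A k hA; elim: k => [|k IH]; first by rewrite expr0; exact: ms1.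
by rewrite exprS; have := msM hm ha _ _ _ _ hA IH; rewrite addr0.
Qed.

Lemma binom_small {K : fieldType} {v : K -> int} : vmulP v -> vaddP v -> forall j w n,
  0 <= j -> msmall v j w -> msmall v (j + j) ((1 + w) ^+ n - 1 - w *+ n).
Proof.
move=> hm ha j w n j0 hw; elim: n => [|n IH].
  by rewrite expr0 mulr0n subrr subr0; exact: ms0.
have -> : (1 + w) ^+ n.+1 - 1 - w *+ n.+1 =
   (1 + w) * ((1 + w) ^+ n - 1 - w *+ n) + (w * w) *+ n.
  rewrite exprS !mulrBr mulr1 mulrnAr mulrDl mul1r mulrS.
  rewrite [(1 + w) * w]mulrDl mul1r mulrnDl.
  by rewrite !opprD !addrA addrNK.
apply: msD => //; last by apply: msMn => //; apply: msM.
have h1w : msmall v 0 (1 + w) by apply: msD => //; [exact: ms1 | exact: msW hw _].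
by have := msM hm ha _ _ _ _ h1w IH; rewrite add0r.
Qed.


Lemma ord2 (i : 'I_2) : i = 0 \/ i = 1.
Proof. case: i => [[|[|n]]] h; [left|right|]; try by apply: val_inj. by []. Qed.

Lemma CH2 {K : fieldType} (A : 'M[K]_2) : A * A = \tr A *: A - \det A *: 1.
Proof.
apply/matrixP => i j; rewrite mulE2 !mxE tr2 det2.
by case: (ord2 i) => ->; case: (ord2 j) => ->; rewrite /= ?mulr1n ?mulr0n; ring.
Qed.

Fixpoint ab {R : pzRingType} (t : R) (k : nat) : R * R :=
  match k with 0 => (0, -1) | k'.+1 => ((t * (ab t k').1 - (ab t k').2), (ab t k').1) end.

Lemma pow_ab {K : fieldType} {A : 'M[K]_2} {t} : A * A = t *: A - 1 ->
  forall k, A ^+ k = (ab t k).1 *: A - (ab t k).2 *: 1.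
Proof.
move=> hA; elim => [|k IH] /=; first by rewrite expr0 scale0r sub0r scaleN1r opprK.
rewrite exprSr IH mulrBl -!scalerAl hA mul1r scalerBr scalerA.
rewrite scalerBl mulrC -!addrA; congr (_ + _); exact: addrC.
Qed.

Definition compm {K : fieldType} (t : K) : 'M[K]_2 :=
  \matrix_(i, j) (if i == 0 then (if j == 0 then 0 else -1) else (if j == 0 then 1 else t)).

Lemma compm_tr {K : fieldType} (t : K) : \tr (compm t) = t.
Proof. by rewrite tr2 !mxE /= add0r. Qed.
Lemma compm_det {K : fieldType} (t : K) : \det (compm t) = 1.
Proof. by rewrite det2 !mxE /= mul0r sub0r mulN1r opprK. Qed.
Lemma compm_sq {K : fieldType} (t : K) : compm t * compm t = t *: compm t - 1.
Proof. by rewrite CH2 compm_tr compm_det scale1r. Qed.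

Lemma compm_pow10 {K : fieldType} (t : K) k : (compm t ^+ k) 1 0 = (ab t k).1.
Proof. by rewrite (pow_ab (compm_sq t)) !mxE /= mulr1 mulr0 subr0. Qed.
Lemma compm_pow00 {K : fieldType} (t : K) k : (compm t ^+ k) 0 0 = - (ab t k).2.
Proof. by rewrite (pow_ab (compm_sq t)) !mxE /= mulr1 mulr0 sub0r. Qed.

Lemma pab_eval {K : fieldType} (t : K) k :
  ((ab 'X k).1).[t] = (ab t k).1 /\ ((ab 'X k).2).[t] = (ab t k).2.
Proof.
elim: k => [|k [IH1 IH2]] /=; first by rewrite hornerN !hornerC.
by rewrite hornerD hornerN hornerM hornerX IH1 IH2.
Qed.

Lemma pab_monic {K : fieldType} k : (0 < k)%N ->
  ((ab ('X : {poly K}) k).1 \is monic) /\ size (ab ('X : {poly K}) k).1 = k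
  /\ (size (ab ('X : {poly K}) k).2 < k)%N.
Proof.
elim: k => [//|k IH] _ /=.
case: k IH => [|k] IH.
  by rewrite /= mulr0 sub0r opprK monic1 size_poly1 size_polyC eqxx.
have [m [s s2]] := IH isT.
move: m s s2; set a := (ab 'X k.+1).1; set b := (ab 'X k.+1).2 => m s s2.
have a0 : a != 0 by apply: monic_neq0.
have hs : size ('X * a) = k.+2 by rewrite mulrC size_mulX // s.
have hlt : (size (- b) < size ('X * a)%R)%N by rewrite size_polyN hs; lia.
split; last split; last by rewrite s.
  by rewrite monicE lead_coefDl // mulrC lead_coefMX; apply/eqP/monicP.
by rewrite size_polyDl // hs.
Qed.


Lemma entry_col {K : fieldType} (A : 'M[K]_2) i j : (A *m (delta_mx j 0 : 'cV[K]_2)) i 0 = A i j.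
Proof. by rewrite -colE mxE. Qed.

Lemma lat_col {K : fieldType} {v : K -> int} : vmulP v -> forall (M : 'M[K]_2) j,
  lattice v M (M *m (delta_mx j 0 : 'cV[K]_2)).
Proof.
move=> hm M j; exists ((delta_mx j 0 : 'cV[K]_2)); split=> // i; rewrite mxE.
by case: (_ && _); [right; rewrite /= v1 | left].
Qed.

Lemma colsys {K : fieldType} {v : K -> int} : vmulP v -> forall (M A : 'M[K]_2) (c : K),
  (forall j, exists z : 'cV[K]_2, (forall i, inO v (z i 0)) /\
      A *m (M *m (delta_mx j 0 : 'cV[K]_2)) = c *: (M *m z)) ->
  exists Z : 'M[K]_2, (forall i j, inO v (Z i j)) /\ A *m M = c *: (M *m Z).
Proof.
move=> hm M A c /fin_all_exists [zf hz].
exists (\matrix_(i, j) zf j i 0); split.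
  by move=> i j; rewrite mxE; case: (hz j).
apply/matrixP => i j; case: (hz j) => _ e.
have := f_equal (fun X : 'cV[K]_2 => X i 0) e.
rewrite mulmxA entry_col => ->; rewrite !mxE; congr (_ * _).
set Z := \matrix_(i, j) _.
have -> : zf j = Z *m (delta_mx j 0 : 'cV[K]_2).
  by apply/matrixP => k l; rewrite (ord1 l) entry_col mxE.
by apply: eq_bigr => k _; rewrite entry_col.
Qed.

Lemma colsys2 {K : fieldType} {v : K -> int} : forall (M A : 'M[K]_2) (c : K),
  (forall j, exists z : 'cV[K]_2, (forall i, inO v (z i 0)) /\
      A *m (M *m z) = c *: (M *m (delta_mx j 0 : 'cV[K]_2))) ->
  exists W : 'M[K]_2, (forall i j, inO v (W i j)) /\ A *m M *m W = c *: M.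
Proof.
move=> M A c /fin_all_exists [zf hz].
exists (\matrix_(i, j) zf j i 0); split.
  by move=> i j; rewrite mxE; case: (hz j).
apply/matrixP => i j; case: (hz j) => _ e.
have e' := f_equal (fun X : 'cV[K]_2 => X i 0) e.
rewrite /= [in RHS]mxE entry_col mulmxA in e'.
rewrite [in RHS]mxE -e'.
set Z := \matrix_(i, j) _.
have -> : zf j = Z *m (delta_mx j 0 : 'cV[K]_2).
  by apply/matrixP => k l; rewrite (ord1 l) entry_col mxE.
by rewrite !mulmxA entry_col.
Qed.

Lemma detO {K : fieldType} {v : K -> int} : vmulP v -> vaddP v -> forall (Z : 'M[K]_2),
  (forall i j, inO v (Z i j)) -> inO v (\det Z).
Proof.
move=> hm ha Z hZ; rewrite det2; apply: (vsB hm ha);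
  by have := vsM hm _ _ _ _ (hZ _ _) (hZ _ _); rewrite addr0.
Qed.

Lemma elliptic_trO {K : fieldType} {v : K -> int} : vmulP v -> vaddP v ->
  forall g : 'M[K]_2, \det g = 1 -> elliptic v g -> inO v (\tr g).
Proof.
move=> hm ha g dg [M [Mu [c [c0 H]]]].
have [Z [hZ eZ]] : exists Z : 'M[K]_2, (forall i j, inO v (Z i j)) /\ g *m M = c *: (M *m Z).
  apply: colsys => // j.
  have [y [z [hz ->]] e] := (H (g *m (M *m (delta_mx j 0 : 'cV[K]_2)))).1 (ex_intro2 _ _ _ (lat_col hm M j) erefl).
  by exists z.
have [W [hW eW]] : exists W : 'M[K]_2, (forall i j, inO v (W i j)) /\ 
    g *m M *m W = c *: M.
  apply: colsys2 => // j.
  have [y [z [hz ->]] e] := (H (c *: (M *m (delta_mx j 0 : 'cV[K]_2)))).2 (ex_intro2 _ _ _ (lat_col hm M j) erefl).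
  by exists z; split.
have eZW : Z *m W = 1%:M.
  have : M *m (Z *m W) = M *m 1%:M.
    rewrite mulmx1 mulmxA.
    apply: (scalerI c0); rewrite -eW eZ -!scalemxAl.
    by [].
  by move/(f_equal (mulmx (invmx M))); rewrite !mulKmx.
have dZW : \det Z * \det W = 1 by rewrite -det_mulmx eZW det1.
have Z0 : \det Z != 0 by apply/eqP => e; move: dZW; rewrite e mul0r => /eqP; rewrite eq_sym oner_eq0.
have W0 : \det W != 0 by apply/eqP => e; move: dZW; rewrite e mulr0 => /eqP; rewrite eq_sym oner_eq0.
have sZW : v (\det Z) + v (\det W) = 0 by rewrite -hm // dZW v1.
have vZ : v (\det Z) = 0.
  case: (detO hm ha Z hZ) => [e|h1]; first by move: Z0; rewrite e eqxx.
  case: (detO hm ha W hW) => [e|h2]; first by move: W0; rewrite e eqxx.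
  lia.
have M0 : \det M != 0 by rewrite -unitfE -unitmxE.
have dc : c ^+ 2 * \det Z = 1.
  have := f_equal determinant eZ; rewrite det_mulmx dg mul1r detZ det_mulmx.
  move/(f_equal (fun x => x / \det M)); rewrite divff // => ->.
  by field.
have vc : v c = 0.
  have : v (c ^+ 2 * \det Z) = 0 by rewrite dc v1.
  rewrite hm ?expf_neq0 // expr2 hm // vZ; lia.
have eg : g = c *: (M *m Z) *m invmx M by rewrite -eZ mulmxK.
rewrite eg -scalemxAl mxtraceZ -mulmxA mxtrace_mulC mulmxKV //.
have hc : vsmall v 0 c by right; rewrite vc.
have := vsM hm 0 0 c (\tr Z) hc; rewrite addr0; apply.
rewrite tr2; exact: (vsD ha _ _ _ (hZ 0 0) (hZ 1 1)).
Qed.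


Lemma step1 {K : fieldType} {v : K -> int} : vmulP v -> vaddP v -> forall (n0 : nat) j (u : 'M[K]_2),
  vsmall v 1 (n0%:R) -> 1 <= j -> msmall v j (u - 1) -> msmall v (j + 1) (u ^+ n0 - 1).
Proof.
move=> hm ha n0 j u hn hj hu.
have -> : u ^+ n0 - 1 = ((1 + (u - 1)) ^+ n0 - 1 - (u - 1) *+ n0) + (u - 1) *+ n0.
  by rewrite [1 + _]addrC !subrK.
apply: (msD ha).
  apply: msW (binom_small hm ha _ _ _ _ hu) _; lia.
move=> i k; rewrite mulmxnE -mulr_natl.
by have := vsM hm _ _ _ _ hn (hu i k); rewrite addrC.
Qed.

Lemma phase1 {K : fieldType} {v : K -> int} : vmulP v -> vaddP v -> forall (n0 : nat) (u : 'M[K]_2),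
  vsmall v 1 (n0%:R) -> msmall v 1 (u - 1) -> forall k : nat, msmall v (k%:Z + 1) (u ^+ (n0 ^ k) - 1).
Proof.
move=> hm ha n0 u hn hu; elim => [|k IH]; first by rewrite expn0 expr1 add0r.
rewrite expnSr exprM.
have := step1 hm ha n0 _ _ hn _ IH; have -> : (k.+1)%:Z + 1 = k%:Z + 1 + 1 by lia.
apply; lia.
Qed.

Definition mexact {K : fieldType} (v : K -> int) (j : int) (A : 'M[K]_2) :=
  msmall v j A /\ ~ msmall v (j + 1) A.

Lemma strict_step {K : fieldType} {v : K -> int} : vmulP v -> vaddP v -> forall (n0 : nat) j (u : 'M[K]_2),
  (n0%:R : K) != 0 -> 1 <= v n0%:R -> v n0%:R + 1 <= j -> mexact v j (u - 1) ->
  mexact v (j + v n0%:R) (u ^+ n0 - 1).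
Proof.
move=> hm ha n0 j u n00 hV hj [hu hnu].
set V := v n0%:R in hj *.
have -> : u ^+ n0 - 1 = ((1 + (u - 1)) ^+ n0 - 1 - (u - 1) *+ n0) + (u - 1) *+ n0.
  by rewrite [1 + _]addrC !subrK.
set w := u - 1 in hu hnu *.
have hY := binom_small hm ha _ _ n0 _ hu.
have hn : vsmall v V (n0%:R) by right.
have hnw : msmall v (j + V) (w *+ n0).
  move=> i k; rewrite mulmxnE -mulr_natl.
  by have := vsM hm _ _ _ _ hn (hu i k); rewrite addrC.
split.
  by apply: (msD ha) => //; apply: msW (hY _) _; lia.
move=> hall; apply: hnu => i k.
have hX : msmall v (j + V + 1) (w *+ n0).
  have -> : w *+ n0 = ((1 + w) ^+ n0 - 1 - w *+ n0 + w *+ n0) - ((1 + w) ^+ n0 - 1 - w *+ n0).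
    by rewrite addrC addKr.
  apply: (msB hm ha) => //; apply: msW (hY _) _; lia.
have := hX i k; rewrite mulmxnE -mulr_natl.
have [->|w0] := eqVneq (w i k) 0; first by left.
move=> [e|h]; first by move/eqP: e; rewrite mulf_eq0 (negbTE n00) (negbTE w0).
right; move: h; rewrite hm // -/V; set z := v (w i k); clearbody V z; lia.
Qed.

Lemma msmall0 {K : fieldType} {v : K -> int} (A : 'M[K]_2) :
  (forall N, msmall v N A) -> A = 0.
Proof.
move=> h; apply/matrixP => i j; rewrite mxE.
case: (h (v (A i j) + 1) i j) => // hh; exfalso; lia.
Qed.

Lemma strict_iter {K : fieldType} {v : K -> int} : vmulP v -> vaddP v -> forall (n0 : nat),
  (n0%:R : K) != 0 -> 1 <= v n0%:R -> forall k j (u : 'M[K]_2),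
  v n0%:R + 1 <= j -> mexact v j (u - 1) -> u ^+ (n0 ^ k) != 1.
Proof.
move=> hm ha n0 n00 hV; elim => [|k IH] j u hj hu.
  rewrite expn0 expr1; apply/eqP => e; case: hu => _; apply.
  by rewrite e subrr => ? ?; rewrite mxE; left.
rewrite expnS exprM; apply: (IH (j + v n0%:R)); first lia.
exact: strict_step.
Qed.


Lemma exists_exact {K : fieldType} {v : K -> int} (A : 'M[K]_2) (J : int) :
  A != 0 -> msmall v J A -> exists j, J <= j /\ mexact v j A.
Proof.
move=> A0 hA.
have [N hN] : exists N, ~ msmall v N A.
  apply: Classical_Prop.NNPP => hn; move/eqP: A0; apply; apply: msmall0 => N.
  by apply: (NNPP (msmall v N A)) => h; apply: hn; exists N.
have key : forall D : nat, ~ msmall v (J + D%:Z) A -> exists d : nat, msmall v (J + d%:Z) A /\ ~ msmall v (J + d%:Z + 1) A.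
  elim => [|D IH] hD; first by exfalso; apply: hD; rewrite addr0.
  case: (Classical_Prop.classic (msmall v (J + D%:Z) A)) => h.
    by exists D; split => //; have -> : J + D%:Z + 1 = J + (D.+1)%:Z by lia.
  exact: IH.
have [d [h1 h2]] : exists d : nat, msmall v (J + d%:Z) A /\ ~ msmall v (J + d%:Z + 1) A.
  apply: (key `|N - J|%N) => h; apply: hN; apply: msW h _; lia.
exists (J + d%:Z); split; first lia.
by split.
Qed.

Lemma detX2 {K : fieldType} (w : 'M[K]_2) n : \det (w ^+ n) = \det w ^+ n.
Proof.
elim: n => [|n IH]; first by rewrite !expr0 det1.
by rewrite !exprS -mulmxE det_mulmx IH.
Qed.

Lemma nilp2 {K : fieldType} (w : 'M[K]_2) N : (0 < N)%N -> w ^+ N = 0 -> w * w = 0.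
Proof.
move=> N0 wN.
have d0 : \det w = 0.
  have := f_equal determinant wN; rewrite detX2 det0 => /eqP; rewrite expf_eq0 N0 /=.
  by move/eqP.
have sq : w * w = \tr w *: w by rewrite CH2 d0 scale0r subr0.
have pw : forall k, w ^+ k.+1 = \tr w ^+ k *: w.
  elim => [|k IH]; first by rewrite expr1 expr0 scale1r.
  by rewrite exprSr IH -scalerAl sq scalerA -exprSr.
move: wN; case: N N0 => // k _; rewrite pw => /eqP; rewrite scaler_eq0 expf_eq0.
case/orP => [/andP [_ /eqP t0]|/eqP ->]; first by rewrite sq t0 scale0r.
by rewrite mul0r.
Qed.

Lemma frob2 {K : fieldType} (p : nat) : p \in [pchar K] -> forall (w : 'M[K]_2) k,
  (1 + w) ^+ (p ^ k) = 1 + w ^+ (p ^ k).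
Proof.
move=> chK.
have chM : p \in [pchar 'M[K]_2].
  move: chK; rewrite !inE => /andP [pp /eqP p0]; rewrite pp /=.
  by rewrite -(rmorph_nat (@scalar_mx K 2)) p0 raddf0.
move=> w; elim => [|k IH]; first by rewrite expn0 !expr1.
rewrite expnSr !exprM IH.
have := pFrobenius_autD_comm chM (commr1 (w ^+ (p ^ k))).
by rewrite !pFrobenius_autE expr1n addrC [_ + 1]addrC.
Qed.


Lemma pigeon {T : eqType} (S : seq T) (F : nat -> T) :
  (forall k, F k \in S) -> exists i j, (i < j <= size S)%N /\ F i = F j.
Proof.
move=> hF; set L := map F (iota 0 (size S).+1).
have : ~~ uniq L.
  apply/negP => u; have := uniq_leq_size u.
  have sub : {subset L <= S} by move=> x /mapP [k _ ->].
  by move/(_ S sub); rewrite size_map size_iota ltnn.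
case/(uniqPn (F 0)) => i [j [ij jL e]].
have jS : (j <= size S)%N by move: jL; rewrite size_map size_iota.
have iS : (i < (size S).+1)%N by lia.
exists i, j; split; first by rewrite ij.
move: e; rewrite /L !(nth_map 0) ?size_iota; try lia.
by rewrite !nth_iota //; lia.
Qed.

Definition resid {K : fieldType} (v : K -> int) (s : seq K) :=
  (forall y, y \in s -> inO v y) /\ forall x, inO v x -> exists2 y, y \in s & vsmall v 1 (x - y).

Lemma rep_exists {K : fieldType} {v : K -> int} (s : seq K) : resid v s ->
  exists rep : K -> K, forall x, inO v x -> rep x \in s /\ vsmall v 1 (x - rep x).
Proof.
move=> [_ hs].
have H : forall x, exists y, inO v x -> y \in s /\ vsmall v 1 (x - y).
  move=> x; case: (classic (inO v x)) => h.
    by have [y ys hy] := hs x h; exists y.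
  by exists x.
exists (fun x => proj1_sig (constructive_indefinite_description _ (H x))).
move=> x hx; exact: (proj2_sig (constructive_indefinite_description _ (H x)) hx).
Qed.

Lemma vs_rep {K : fieldType} {v : K -> int} : vmulP v -> vaddP v -> forall x y r,
  vsmall v 1 (x - r) -> vsmall v 1 (y - r) -> vsmall v 1 (x - y).
Proof.
move=> hm ha x y r h1 h2; have := vsB hm ha _ _ _ h1 h2.
by rewrite opprB addrA subrK.
Qed.

Lemma n0_exists {K : fieldType} {v : K -> int} (s : seq K) : vmulP v -> vaddP v -> resid v s ->
  exists n0 : nat, (0 < n0)%N /\ vsmall v 1 (n0%:R : K).
Proof.
move=> hm ha hs; have [rep hrep] := rep_exists s hs.
have [i [j [/andP [ij _] e]]] := pigeon s (fun k => rep (k%:R)) (fun k => (hrep _ (vs0n hm ha k)).1).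
exists (j - i)%N; split; first lia.
rewrite natrB; last lia.
apply: (vs_rep hm ha _ _ (rep (i%:R))); first by rewrite e; exact: (hrep _ (vs0n hm ha j)).2.
exact: (hrep _ (vs0n hm ha i)).2.
Qed.

Lemma ms_entries {K : fieldType} {v : K -> int} N (A : 'M[K]_2) :
  vsmall v N (A 0 0) -> vsmall v N (A 0 1) -> vsmall v N (A 1 0) -> vsmall v N (A 1 1) ->
  msmall v N A.
Proof. by move=> h1 h2 h3 h4 i j; case: (ord2 i) => ->; case: (ord2 j) => ->. Qed.

Lemma compm_O {K : fieldType} {v : K -> int} : vmulP v -> forall t, inO v t -> msmall v 0 (compm t).
Proof.
move=> hm t ht; apply: ms_entries; rewrite !mxE /=; try by left.
- by apply: vsN => //; exact: vs01.
- exact: vs01.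
- exact: ht.
Qed.

Lemma compm_ret {K : fieldType} {v : K -> int} (s : seq K) : vmulP v -> vaddP v -> resid v s ->
  exists R0 : nat, forall t, inO v t ->
  exists r, (0 < r <= R0)%N /\ msmall v 1 (compm t ^+ r - 1).
Proof.
move=> hm ha hs; have [rep hrep] := rep_exists s hs.
set S2 := [seq (a, b) | a <- s, b <- s].
set S4 := [seq (x, y) | x <- S2, y <- S2].
exists (size S4) => t ht.
set C := compm t.
have hC := compm_O hm t ht.
have hCk : forall k, msmall v 0 (C ^+ k) by move=> k; apply: msX.
set F := fun k => ((rep ((C ^+ k) 0 0), rep ((C ^+ k) 0 1)), (rep ((C ^+ k) 1 0), rep ((C ^+ k) 1 1))).
have hF : forall k, F k \in S4.
  move=> k; rewrite /F; apply: allpairs_f; apply: allpairs_f; exact: (hrep _ (hCk _ _ _)).1.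
have [i [j [/andP [ij jS] e]]] := pigeon S4 F hF.
exists (j - i)%N; split; first by rewrite subn_gt0 ij /=; exact: leq_trans (leq_subr _ _) jS.
have hji : msmall v 1 (C ^+ j - C ^+ i).
  move: e; rewrite /F => [[e1 e2 e3 e4]].
  have he : forall a b, rep ((C ^+ i) a b) = rep ((C ^+ j) a b) ->
      vsmall v 1 ((C ^+ j) a b - (C ^+ i) a b).
    move=> a b eab; apply: (vs_rep hm ha _ _ (rep ((C ^+ i) a b))); last exact: (hrep _ (hCk _ _ _)).2.
    rewrite eab; exact: (hrep _ (hCk _ _ _)).2.
  by apply: ms_entries; rewrite !mxE; apply: he.
set D := t *: 1 - C.
have DC : D * C = 1 by rewrite /D mulrBl -scalerAl mul1r compm_sq opprB addrC subrK.
have CD : C * D = 1 by rewrite /D mulrBr -scalerAr mulr1 compm_sq opprB addrC subrK.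
have DCk : forall k, D ^+ k * C ^+ k = 1.
  elim => [|k IH]; first by rewrite !expr0 mulr1.
  by rewrite exprSr exprS mulrA -(mulrA _ D) DC mulr1.
have -> : C ^+ (j - i) - 1 = D ^+ i * (C ^+ j - C ^+ i).
  rewrite mulrBr DCk; congr (_ - _).
  by rewrite -(subnKC (ltnW ij)) exprD mulrA DCk mul1r addKn.
have hD : msmall v 0 (D ^+ i).
  apply: msX => //; apply: (msB hm ha) => //.
  by have := msZ hm 0 0 t 1 ht (ms1 hm); rewrite addr0.
by have := msM hm ha _ _ _ _ hD hji; rewrite add0r.
Qed.

Lemma torsion_bound {K : fieldType} {v : K -> int} (s : seq K) : vmulP v -> vaddP v -> resid v s ->
  exists n0 E : nat, vsmall v 1 (n0%:R : K) /\ (0 < E)%N /\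
  forall u : 'M[K]_2, msmall v 1 (u - 1) -> (exists k, u ^+ (n0 ^ k) = 1) -> u ^+ E = 1.
Proof.
move=> hm ha hs.
case: (classic (exists p, p \in [pchar K])) => [[p hp]|nch].
  have pp : prime p by move: hp; rewrite inE => /andP [].
  exists p, p; split; first by left; exact: pcharf0.
  split; first exact: prime_gt0.
  move=> u _ [k hk].
  have eu : u = 1 + (u - 1) by rewrite addrC subrK.
  move: hk; rewrite eu frob2 // => /(f_equal (fun X => X - 1)); rewrite addrC addKr subrr => wk.
  have w2 := nilp2 (u - 1) (p ^ k)%N ltac:(by rewrite expn_gt0 prime_gt0) wk.
  rewrite eu -{1}(expn1 p) frob2 // expn1.
  have p2 : (p = (p - 2) + 2)%N by have := prime_gt1 pp; lia.
  by rewrite p2 exprD expr2 -eu w2 mulr0 addr0.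
have [n0 [n0p hn0]] := n0_exists s hm ha hs.
have n00 : (n0%:R : K) != 0.
  by apply/negP => h; apply: nch; exact: (natf0_pchar n0p h).
have hV : 1 <= v (n0%:R : K) by case: hn0 => // e; move: n00; rewrite e eqxx.
set V := v (n0%:R : K) in hV.
exists n0, (n0 ^ `|V|)%N; split => //; split; first by rewrite expn_gt0 n0p.
move=> u hu [k hk].
set u' := u ^+ (n0 ^ `|V|).
have h1 := phase1 hm ha n0 u hn0 hu `|V|.
case: (eqVneq u' 1) => // ne.
have [j [hj ej]] := exists_exact (u' - 1) (`|V|%:Z + 1) ltac:(by rewrite subr_eq0) h1.
have hVj : v (n0%:R : K) + 1 <= j.
  have : `|V|%:Z = V by apply: gez0_abs; lia.
  rewrite -/V; lia.
have := strict_iter hm ha n0 n00 hV k j u' hVj ej.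
by rewrite /u' -exprM mulnC exprM hk expr1n eqxx.
Qed.


Definition scal2 {K : fieldType} (h : 'M[K]_2) := h 0 1 = 0 /\ h 1 0 = 0 /\ h 0 0 = h 1 1.

Lemma nonscalar_lin {K : fieldType} (h : 'M[K]_2) a c : ~ scal2 h ->
  a *: h - c *: 1 = 0 -> a = 0 /\ c = 0.
Proof.
move=> ns e.
have e01 := f_equal (fun X : 'M[K]_2 => X 0 1) e.
have e10 := f_equal (fun X : 'M[K]_2 => X 1 0) e.
have e00 := f_equal (fun X : 'M[K]_2 => X 0 0) e.
have e11 := f_equal (fun X : 'M[K]_2 => X 1 1) e.
move: e01 e10 e00 e11; rewrite !mxE /= ?mulr1n ?mulr0n ?mulr1 ?mulr0 ?subr0 => e01 e10 e00 e11.
have a0 : a = 0.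
  case: (eqVneq a 0) => // a0; exfalso; apply: ns.
  move/eqP: e01; rewrite mulf_eq0 (negbTE a0) /= => /eqP h01.
  move/eqP: e10; rewrite mulf_eq0 (negbTE a0) /= => /eqP h10.
  split => //; split => //.
  apply: (mulfI a0); have : a * h 0 0 - c = a * h 1 1 - c by rewrite e00 e11.
  by move/addIr.
by split => //; move: e00; rewrite a0 mul0r sub0r => /eqP; rewrite oppr_eq0 => /eqP.
Qed.

Lemma key {K : fieldType} {v : K -> int} (s : seq K) : vmulP v -> vaddP v -> resid v s ->
  exists L : nat, (0 < L)%N /\ forall (h : 'M[K]_2) (B : int), B <= 0 ->
  \det h = 1 -> inO v (\tr h) -> msmall v B h -> discrete_set v (cyclic_sub h) ->
  ~ scal2 h -> (ab (\tr h) L).1 = 0.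
Proof.
move=> hm ha hs.
have [n0 [E [hn0 [E0 hE]]]] := torsion_bound s hm ha hs.
have [R0 hR0] := compm_ret s hm ha hs.
exists (R0`! * E)%N; split; first by rewrite muln_gt0 fact_gt0 E0.
move=> h B B0 dh ht hB dsc ns.
set t := \tr h in ht *.
have hh : h * h = t *: h - 1 by rewrite CH2 dh scale1r.
have [r [/andP [r0 rR] hr]] := hR0 t ht.
set C := compm t.
set u := C ^+ r.
have h1 := phase1 hm ha n0 u hn0 hr.
have [N0 hN0] := dsc 1 (ex_intro _ 0 erefl).
set k := `|N0 - B|%N.
set m := (r * n0 ^ k)%N.
have Cm : C ^+ m = u ^+ (n0 ^ k) by rewrite /u -exprM.
set a := (ab t m).1; set b := (ab t m).2.
have hCm : msmall v (k%:Z + 1) (C ^+ m - 1) by rewrite Cm; exact: h1.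
have ha1 : vsmall v (k%:Z + 1) a.
  by have := hCm 1 0; rewrite !mxE /= compm_pow10 mulr0n subr0.
have hb1 : vsmall v (k%:Z + 1) (b + 1).
  have := hCm 0 0; rewrite !mxE /= compm_pow00 mulr1n -opprD => /(vsN hm).
  by rewrite opprK.
have ehm : h ^+ m - 1 = a *: h - (b + 1) *: 1.
  by rewrite (pow_ab hh) scalerDl scale1r opprD addrA.
have hsm : msmall v (k%:Z + 1 + B) (h ^+ m - 1).
  rewrite ehm; apply: (msB hm ha); first exact: msZ.
  have := msZ hm _ _ _ _ hb1 (ms1 hm); rewrite addr0 => H; apply: msW H _; lia.
have hm1 : h ^+ m = 1.
  apply: hN0; first by exists m%:Z.
  move=> i j; have := hsm i j; rewrite !mxE => H; apply: vsW H _; lia.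
have [a0 b0] : a = 0 /\ b + 1 = 0 by apply: (nonscalar_lin h a (b + 1) ns); rewrite -ehm hm1 subrr.
have um : u ^+ (n0 ^ k) = 1.
  rewrite -Cm (pow_ab (compm_sq t)) -/a -/b a0 scale0r sub0r.
  by move/eqP: b0; rewrite addr_eq0 => /eqP ->; rewrite scaleN1r opprK.
have uE := hE u hr (ex_intro _ k um).
have [q hq] : exists q, R0`! = (r * q)%N.
  have := dvdn_fact (m := r) (n := R0); rewrite r0 rR => /(_ isT) /dvdnP [q hq].
  by exists q; rewrite hq mulnC.
rewrite -compm_pow10 hq mulnAC exprM exprM uE expr1n.
by rewrite mxE.
Qed.


Lemma roots_list {K : fieldType} (p : {poly K}) : p != 0 ->
  exists l : seq K, forall x, root p x -> x \in l.
Proof.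
have : (size p <= size p)%N by [].
move: {2}(size p) => n; elim: n p => [|n IH] p sp p0.
  by move: p0; rewrite -size_poly_eq0; move: sp; rewrite leqn0 => ->.
case: (classic (exists x, root p x)) => [[x /factor_theorem [q eq]]|nr]; last first.
  by exists [::] => x rx; exfalso; apply: nr; exists x.
have q0 : q != 0 by apply/eqP => e; move: p0; rewrite eq e mul0r eqxx.
have sq : (size q <= n)%N.
  move: sp; rewrite eq size_Mmonic ?monicXsubC // size_XsubC; change (2%R : nat) with 2%N; by rewrite addn2 /= ltnS.
have [l hl] := IH q sq q0.
exists (x :: l) => y; rewrite eq rootM root_XsubC inE => /orP [/hl ->|->]; by rewrite ?orbT.
Qed.

Lemma sep_list {K : fieldType} {v : K -> int} (l : seq K) : (forall d, d \in l -> d != 0) ->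
  exists N, forall d, d \in l -> ~ vsmall v N d.
Proof.
elim: l => [|d l IH] hl; first by exists 0.
have [N hN] := IH (fun x hx => hl x (mem_behead (s := d :: l) hx)).
have d0 : d != 0 by apply: hl; rewrite inE eqxx.
exists (Order.max N (v d + 1)) => x; rewrite inE => /orP [/eqP ->|xl] h.
  by apply: (vsnot (v := v) _ d0); apply: (vsW _ _ _ h); lia.
by apply: (hN x xl); apply: (vsW _ _ _ h); lia.
Qed.

Lemma sep_pairs {K : fieldType} {v : K -> int} (l : seq K) :
  exists N, forall x y, x \in l -> y \in l -> x != y -> ~ vsmall v N (x - y).
Proof.
set l2 := [seq d <- [seq x - y | x <- l, y <- l] | d != 0].
have [N hN] := sep_list (v := v) l2 (fun d hd => (elimT andP (etrans (esym (mem_filter _ _ _)) hd)).1 ).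
exists N => x y xl yl xy; apply: hN.
by rewrite mem_filter subr_eq0 xy /=; apply: allpairs_f.
Qed.

Lemma mat_bound {K : fieldType} {v : K -> int} (A : 'M[K]_2) :
  exists B, B <= 0 /\ msmall v B A.
Proof.
exists (Order.min (Order.min (Order.min 0 (v (A 0 0))) (Order.min 0 (v (A 0 1))))
   (Order.min (Order.min 0 (v (A 1 0))) (Order.min 0 (v (A 1 1))))); split; first lia.
have e : forall x : K, vsmall v (Order.min 0 (v x)) x.
  by move=> x; case: (eqVneq x 0) => [->|_]; [left|right; lia].
by apply: ms_entries; apply: (vsW _ _ _ (e _)); lia.
Qed.




Theorem corollary4p2 (K : fieldType) (v : K -> int)
  (HK : nonarch_local_field v)
  (gs : nat -> 'M[K]_2) (g : 'M[K]_2) :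
  (forall n, \det (gs n) = 1) ->
  (forall n, discrete_set v (cyclic_sub (gs n))) ->
  \det g = 1 ->
  mx_conv v gs g ->
  elliptic v g ->
  exists N : nat, forall n, (N <= n)%N -> \tr (gs n) = \tr (gs N).
Proof.
move=> hdet hdisc dg hconv hell.
case: HK => hm ha _ _ [s [hs1 hs2]].
have hs : resid v s by split.
have [L [L0 HL]] := key s hm ha hs.
set Q : {poly K} := (ab 'X L).1 * ('X^2 - (4 : K)%:P).
have Q0 : Q != 0.
  have [m _] := pab_monic (K := K) L L0.
  by rewrite mulf_neq0 // monic_neq0 // monicXnsubC.
have [lQ hlQ] := roots_list Q Q0.
have [Ns hNs] := sep_pairs (v := v) lQ.
have tO := elliptic_trO hm ha g dg hell.
set t := \tr g in tO.
have tconv : forall N, exists M, forall n, (M <= n)%N -> vsmall v N (\tr (gs n) - t).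
  move=> N; have [M1 h1] := hconv 0 0 N; have [M2 h2] := hconv 1 1 N.
  exists (maxn M1 M2) => n hn; rewrite /t !tr2.
  have -> : gs n 0 0 + gs n 1 1 - (g 0 0 + g 1 1) = (gs n 0 0 - g 0 0) + (gs n 1 1 - g 1 1).
    by rewrite opprD !addrA; congr (_ + _); rewrite -!addrA; congr (_ + _); rewrite addrC.
  by apply: (vsD ha); [apply: h1 | apply: h2]; lia.
have [B [B0 hB]] := mat_bound (v := v) g.
have [M0 hM0] : exists M, forall n, (M <= n)%N -> msmall v 0 (gs n - g).
  have [M00 h00] := hconv 0 0 0; have [M01 h01] := hconv 0 1 0.
  have [M10 h10] := hconv 1 0 0; have [M11 h11] := hconv 1 1 0.
  exists (maxn (maxn M00 M01) (maxn M10 M11)) => n hn.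
  apply: ms_entries; rewrite !mxE; [apply: h00|apply: h01|apply: h10|apply: h11]; lia.
have [Mt hMt] := tconv 0.
have [M1 hM1] := tconv Ns.
have rootQ : forall n, (maxn M0 Mt <= n)%N -> root Q (\tr (gs n)).
  move=> n hn.
  have hBn : msmall v B (gs n).
    have -> : gs n = (gs n - g) + g by rewrite subrK.
    by apply: (msD ha) => //; apply: (msW _ _ _ (hM0 n _)); lia.
  have htn : inO v (\tr (gs n)).
    have -> : \tr (gs n) = (\tr (gs n) - t) + t by rewrite subrK.
    by apply: (vsD ha) => //; apply: hMt; lia.
  rewrite /Q rootM; case: (classic (scal2 (gs n))) => [[e01 [e10 e00]]|ns].
    apply/orP; right; rewrite /root !hornerE tr2 -e00.
    have := hdet n; rewrite det2 e01 e10 mul0r subr0 -e00 => d1.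
    apply/eqP; have -> : (gs n 0 0 + gs n 0 0) ^+ 2 - 4 = 4 * (gs n 0 0 * gs n 0 0 - 1) by ring.
    by rewrite d1 subrr mulr0.
  apply/orP; left; rewrite /root (pab_eval (\tr (gs n)) L).1.
  by rewrite (HL (gs n) B B0 (hdet n) htn hBn (hdisc n) ns).
exists (maxn (maxn M0 Mt) M1) => n hn.
apply/eqP; apply: Classical_Prop.NNPP => ne.
apply: (hNs (\tr (gs n)) (\tr (gs (maxn (maxn M0 Mt) M1)))); [apply: hlQ; apply: rootQ; lia
  | apply: hlQ; apply: rootQ; lia | exact/negP | ].
have -> : \tr (gs n) - \tr (gs (maxn (maxn M0 Mt) M1)) =
  (\tr (gs n) - t) - (\tr (gs (maxn (maxn M0 Mt) M1)) - t) by rewrite opprB addrA subrK.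
by apply: (vsB hm ha); apply: hM1; lia.
Qed.
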